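(* For every $a \in \mathbb{N}$ and every integer $b \ge 2$, $R_\mathrm{cyc}(S_a, C_b^\mathrm{mon}) = 1 + (a-1)(b-1)$, where $S_a$ is any star graph of order $a$.
   Context: All graphs are finite, simple and undirected, and a graph of order $n$ has vertex set $\{0,1,\ldots,n-1\}$; $K_n$ is the complete graph on $\{0,\ldots,n-1\}$. A $2$-edge-coloring of $K_n$ assigns each edge a color in $\{1,2\}$. An embedding of $H$ in color $j$ is an injective map $\varphi\colon V(H)\to V(K_n)$ such that every edge $uv$ of $H$ goes to an edge $\{\varphi(u),\varphi(v)\}$ of color $j$; it is increasing up to a cyclic permutation if there exists $t\in V(H)$ such that $(\varphi(t),\ldots,\varphi(|H|-1),\varphi(0),\ldots,\varphi(t-1))$ is increasing. $R_\mathrm{cyc}(H_1,H_2)$ is the smallest $n$ such that every $2$-edge-coloring of $K_n$ admits an embedding of $H_1$ in color $1$ or of $H_2$ in color $2$ that is increasing up to a cyclic permutation. A star graph of order $n$ is a graph on $\{0,\ldots,n-1\}$ in which one vertex (the center, arbitrary) is adjacent to all others and there are no other edges. For $n\ge3$ the monotone cycle $C_n^\mathrm{mon}$ has edges $\{i,i+1\}$ ($0\le i\le n-2$) and $\{0,n-1\}$; by convention $C_2^\mathrm{mon}=K_2$. *)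

(* Defs.v *)
From mathcomp Require Import all_boot.
Set Implicit Arguments. Unset Strict Implicit. Unset Printing Implicit Defensive.

(* A graph of order h is an edge relation on 'I_h = {0,...,h-1}
   (for the graphs used here it is symmetric and irreflexive). *)

(* A 2-edge-colouring of K_n: [c x y] for x < y gives the colour of the edge
   {x,y}; [true] stands for colour 1 and [false] for colour 2. *)
Definition coloring (n : nat) := 'I_n -> 'I_n -> bool.

Definition edge_col n (c : coloring n) (x y : 'I_n) : bool :=
  if (x < y)%N then c x y else c y x.

Definition embedding_in_color h n (eH : rel 'I_h) (c : coloring n) (j : bool)
  (phi : 'I_h -> 'I_n) : Prop :=
  injective phi /\
  forall u v : 'I_h, eH u v -> u != v -> edge_col c (phi u) (phi v) = j.

Definition cyc_increasing h n (phi : 'I_h -> 'I_n) : Prop :=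
  exists t : 'I_h, sorted ltn (rot t [seq val (phi i) | i <- enum 'I_h]).

Definition ramsey_cyc_prop h1 h2 (e1 : rel 'I_h1) (e2 : rel 'I_h2) (n : nat)
  : Prop :=
  forall c : coloring n,
    (exists phi, embedding_in_color e1 c true phi /\ cyc_increasing phi) \/
    (exists phi, embedding_in_color e2 c false phi /\ cyc_increasing phi).

Definition Rcyc_eq h1 h2 (e1 : rel 'I_h1) (e2 : rel 'I_h2) (m : nat) : Prop :=
  ramsey_cyc_prop e1 e2 m /\ forall n, (n < m)%N -> ~ ramsey_cyc_prop e1 e2 n.

Definition is_star a (e : rel 'I_a) : Prop :=
  exists ctr : 'I_a, forall u v : 'I_a,
    e u v = ((u == ctr) && (v != ctr)) || ((v == ctr) && (u != ctr)).

(* monotone cycle C_b^mon: edges {i,i+1} and {0,b-1}; for b = 2 this is K_2 *)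
Definition cmon (b : nat) : rel 'I_b :=
  fun u v => (u != v) &&
    [|| (val u).+1 == val v, (val v).+1 == val u,
        (val u == 0) && (val v == b.-1) | (val v == 0) && (val u == b.-1)].
Arguments cmon b : clear implicits.

(* Main.v *)
Require Import Defs.
From mathcomp Require Import all_boot zify.
Set Implicit Arguments. Unset Strict Implicit. Unset Printing Implicit Defensive.


Lemma sorted_map_iota (w : nat -> nat) m s :
  (forall i, s <= i -> i.+1 < s + m -> w i < w i.+1) -> sorted ltn (map w (iota s m)).
Proof.
elim: m s => [|m IH] s H //=.
case: m IH H => [|m] IH H //=.
rewrite H ?leqnn //; last by lia.
have := IH s.+1 (fun i h1 h2 => H i (ltnW h1) ltac:(lia)).
by [].
Qed.

Lemma cyc_of h n (phi : 'I_h -> 'I_n) (w : nat -> nat) (s : nat) :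
  0 < h -> s < h -> (forall i, i.+1 < h -> w i < w i.+1) ->
  (forall i : 'I_h, val (phi i) = w ((i + s) %% h)) -> cyc_increasing phi.
Proof.
move=> h0 sh wi Hphi.
have Hf : [seq val (phi i) | i <- enum 'I_h] = map (fun j => w ((j + s) %% h)) (iota 0 h).
  by rewrite -val_enum_ord -map_comp; apply: eq_map => i /=; rewrite Hphi.
have Hw : sorted ltn (map w (iota 0 h)).
  by apply: sorted_map_iota => i _; rewrite add0n; apply: wi.
case: (posnP s) => [s0|spos].
  exists (Ordinal h0); rewrite rot0 Hf.
  rewrite s0; congr sorted: Hw; apply/eq_in_map => j; rewrite mem_iota => /andP[_ jh].
  by rewrite addn0 modn_small.
have th : h - s < h by lia.
exists (Ordinal th); rewrite Hf /=.
congr sorted: Hw.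
apply: (@eq_from_nth _ 0); first by rewrite size_rot !size_map size_iota.
move=> j; rewrite size_map size_iota => jh.
rewrite /rot nth_cat size_drop !size_map size_iota (nth_map 0) ?size_iota // nth_iota // add0n.
have E : h - (h - s) = s by lia.
rewrite E.
case: ifP => js.
  rewrite nth_drop (nth_map 0) ?size_iota; last by lia.
  rewrite nth_iota; last by lia.
  have -> : 0 + (h - s + j) + s = j + h by lia.
  by rewrite modnDr modn_small.
rewrite nth_take; last by lia.
rewrite (nth_map 0) ?size_iota; last by lia.
rewrite nth_iota; last by lia.
have -> : 0 + (j - s) + s = j by lia.
by rewrite modn_small.
Qed.


Lemma enum_set_sorted n (A : {set 'I_n}) : sorted ltn (map val (enum A)).
Proof.
  rewrite -[enum _](eq_filter (mem_enum _)).
  rewrite -(eq_filter (mem_map val_inj _)) -filter_map.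
  by rewrite (sorted_filter ltn_trans) // unlock val_ord_enum iota_ltn_sorted.
Qed.

Lemma pick_sorted n (W : {set 'I_n}) (x0 : 'I_n) :
  (forall i j, i < j < #|W| -> val (nth x0 (enum W) i) < val (nth x0 (enum W) j)) /\
  (forall j, j < #|W| -> nth x0 (enum W) j \in W) /\
  (forall y, y \in W -> exists2 j, j < #|W| & nth x0 (enum W) j = y).
Proof.
have sz : size (enum W) = #|W| by rewrite cardE.
split; [|split].
- move=> i j /andP[ij jW].
  have := sorted_ltn_nth ltn_trans 0 (enum_set_sorted W).
  move=> /(_ i j); rewrite !inE size_map sz !(nth_map x0) ?sz //; last by lia.
  by apply => //; lia.
- by move=> j jW; rewrite -mem_enum mem_nth // sz.
- move=> y yW; exists (index y (enum W)); first by rewrite -sz index_mem mem_enum.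
  by rewrite nth_index // mem_enum.
Qed.

Lemma edge_colC n (c : coloring n) x y : x != y -> edge_col c x y = edge_col c y x.
Proof.
rewrite /edge_col => nxy.
case: (ltngtP x y) => //= h.
by move/val_inj: h => h; rewrite h eqxx in nxy.
Qed.


Definition nbr n (c : coloring n) x := [set y | (y != x) && edge_col c x y].

Lemma indep n (c : coloring n) k : (forall x, #|nbr c x| < k) ->
  forall S : {set 'I_n}, exists T : {set 'I_n}, [/\ T \subset S,
    (forall x y, x \in T -> y \in T -> x != y -> edge_col c x y = false) &
    #|S| <= k * #|T|].
Proof.
move=> H S; move: {2}#|S| (leqnn #|S|) => m; elim: m S => [|m IH] S Sm.
  exists set0; split; rewrite ?sub0set //; last by lia.
  by move=> x y; rewrite inE.
case: (set_0Vmem S) => [->|[x xS]].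
  exists set0; split; rewrite ?sub0set ?cards0 ?muln0 //; last by move=> x y; rewrite inE.
set B := x |: nbr c x.
have xB : x \in B by rewrite /B setU11.
have cB : #|B| <= k.
  rewrite /B cardsU1 inE eqxx /= add1n; exact: H.
have := cardsID B S => cS.
have cSB : #|S :&: B| <= #|B| by apply: subset_leq_card; apply: subsetIr.
have xSB : x \in S :&: B by rewrite inE xS xB.
have cSB1 : 0 < #|S :&: B| by apply/card_gt0P; exists x.
have [T [TS Ti Tc]] := IH (S :\: B) ltac:(lia).
exists (x |: T); split.
- by rewrite subUset sub1set xS (subset_trans TS) // subsetDl.
- have xT : x \notin T by apply: contraTN xB => /(subsetP TS); rewrite inE => /andP[].
  have nb y : y \in T -> y != x -> edge_col c x y = false.
    move=> /(subsetP TS); rewrite !inE => /andP[yB _] yx; move: yB.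
    by rewrite (negbTE yx) /=; case: (edge_col c x y).
  move=> y z; rewrite !inE => /orP[/eqP->|yT] /orP[/eqP->|zT]; rewrite ?eqxx //.
  + by move=> xz; apply: nb => //; rewrite eq_sym.
  + by move=> zx; rewrite edge_colC // nb // eq_sym.
  + exact: Ti.
- have xT : x \notin T by apply: contraTN xB => /(subsetP TS); rewrite inE => /andP[].
  rewrite cardsU1 xT; lia.
Qed.


Definition cmonN (b : nat) : rel nat :=
  fun u v => (u != v) &&
    [|| u.+1 == v, v.+1 == u, (u == 0) && (v == b.-1) | (v == 0) && (u == b.-1)].

Lemma path_iota_succ b j m : path (cmonN b) j (iota j.+1 m).
Proof.
elim: m j => [|m IH] j //=.
rewrite IH andbT /cmonN eqxx /= andbT; apply/eqP; lia.
Qed.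

Lemma last_iota_succ j m : last j (iota j.+1 m) = j + m.
Proof. by elim: m j => [|m IH] j /=; [rewrite addn0 | rewrite IH; lia]. Qed.

Lemma cycle_cmon b : 2 <= b -> cycle (cmon b) (enum 'I_b).
Proof.
move=> b2.
have E : cmon b =2 relpre val (cmonN b) by move=> u v.
rewrite (eq_cycle E) -cycle_map val_enum_ord.
case: b b2 {E} => [|[|b]] // _.
rewrite /= rcons_path path_iota_succ last_iota_succ /= /cmonN /=.
by rewrite !eqxx /=; apply/orP; right; apply/eqP; lia.
Qed.


Lemma lower a b (e : rel 'I_a) n : 1 <= a -> 2 <= b -> is_star e ->
  n < 1 + (a - 1) * (b - 1) -> ~ ramsey_cyc_prop e (cmon b) n.
Proof.
move=> a1 b2 [ctr Hctr] nlt H.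
set k := a - 1.
pose c : coloring n := fun x y => val x %/ k == val y %/ k.
have Ec x y : edge_col c x y = (val x %/ k == val y %/ k).
  by rewrite /edge_col /c; case: ifP => _ //; rewrite eq_sym.
have kpos : 0 < n -> 0 < k.
  move=> n0; rewrite lt0n; apply/negP => /eqP k0.
  by move: nlt; rewrite -/k k0 mul0n; lia.
case: (H c) => [[phi [[inj col] _]] | [phi [[inj col] [t st]]]].
- have kp : 0 < k by apply: kpos; exact: (leq_ltn_trans (leq0n _) (ltn_ord (phi ctr))).
  have same u : val (phi u) %/ k = val (phi ctr) %/ k.
    case: (eqVneq u ctr) => [->//|uc].
    have := col ctr u; rewrite Hctr eqxx uc /= Ec => /(_ isT).
    by rewrite eq_sym uc => /(_ isT) /eqP ->.
  pose h (u : 'I_a) : 'I_k := Ordinal (ltn_pmod (val (phi u)) kp).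
  have hinj : injective h.
    move=> u v /(congr1 val) /= huv; apply: inj; apply: val_inj.
    by rewrite (divn_eq (val (phi u)) k) (divn_eq (val (phi v)) k) huv !same.
  have := leq_card h hinj; rewrite !card_ord /k; lia.
- have n0 : 0 < n.
    have [x _] : exists x : 'I_b, true by exists (Ordinal (leq_trans (isT : 0 < 2) b2)).
    exact: (leq_ltn_trans (leq0n _) (ltn_ord (phi x))).
  have kp := kpos n0.
  set R := rot t (enum 'I_b).
  have sR : sorted (cmon b) R.
    have := cycle_cmon b2; rewrite -(rot_cycle t) -/R.
    case: R => [|x0 s] //= Hc.
    by move: Hc; rewrite rcons_path => /andP[].
  have sL : sorted (relpre (fun i => val (phi i)) ltn) R.
    by rewrite -sorted_map /R map_rot.
  have sB : sorted ltn (map (fun i => val (phi i) %/ k) R).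
    have sI : sorted [rel x y | relpre (fun i => val (phi i)) ltn x y && cmon b x y] R.
      by rewrite sorted_relI sL sR.
    rewrite sorted_map; apply: (sub_sorted _ sI).
    move=> x y /= /andP[lt cm].
    have xy : x != y by move: cm => /andP[].
    have := col x y cm xy; rewrite Ec => /eqP nb.
    rewrite ltn_neqAle leq_div2r ?andbT; last exact: ltnW.
    by apply/eqP.
  have U := sorted_uniq ltn_trans ltnn sB.
  have Hsub : {subset map (fun i => val (phi i) %/ k) R <= iota 0 (b - 1)}.
    move=> y /mapP[i _ ->]; rewrite mem_iota add0n /=.
    rewrite ltn_divLR //; have := ltn_ord (phi i); rewrite /k; nia.
  have := uniq_leq_size U Hsub.
  rewrite size_iota size_map size_rot size_enum_ord; lia.
Qed.


Lemma inc_inj (f : nat -> nat) m : (forall i j, i < j < m -> f i < f j) ->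
  forall i j, i < m -> j < m -> f i = f j -> i = j.
Proof.
move=> H i j im jm E; case: (ltngtP i j) => // h.
- by have := H i j; rewrite h jm E ltnn => /(_ isT).
- by have := H j i; rewrite h im E ltnn => /(_ isT).
Qed.

Lemma upper a b (e : rel 'I_a) : 1 <= a -> 2 <= b -> is_star e ->
  ramsey_cyc_prop e (cmon b) (1 + (a - 1) * (b - 1)).
Proof.
move=> a1 b2 [ctr Hctr] c.
set n := 1 + (a - 1) * (b - 1).
set k := a - 1.
case: (pickP (fun x => k <= #|nbr c x|)) => [x Hx | Hno].
- left.
  set N := nbr c x.
  pose N' := [set y in take k (enum N)].
  have cN' : #|N'| = k.
    rewrite cardsE (card_uniqP _) ?take_uniq ?enum_uniq //.
    by rewrite size_takel // -cardE.
  have sN' : N' \subset N.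
    by apply/subsetP => y; rewrite inE => /mem_take; rewrite mem_enum.
  have xN : x \notin N by rewrite inE eqxx.
  have xN' : x \notin N' by apply: contraNN xN => /(subsetP sN').
  set W := x |: N'.
  have cW : #|W| = a by rewrite cardsU1 xN' cN' /k; lia.
  have [vinc [vW vsurj]] := pick_sorted W x.
  rewrite cW in vinc vW vsurj.
  set v := fun j => nth x (enum W) j.
  have [p pa vp] := vsurj x (setU11 _ _).
  pose s := (p + (a - ctr)) %% a.
  have a0 : 0 < a by [].
  have sa : s < a by apply: ltn_pmod.
  have idx (i : 'I_a) : (i + s) %% a < a by apply: ltn_pmod.
  pose phi (i : 'I_a) : 'I_n := v ((i + s) %% a).
  have vinj : forall i j, i < a -> j < a -> v i = v j -> i = j.
    move=> i j ia ja E; apply: (inc_inj (f := fun j => val (v j)) vinc) => //.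
    by rewrite /= E.
  have phiinj : injective phi.
    move=> u w E; have := vinj _ _ (idx u) (idx w) E => /eqP.
    rewrite eqn_modDr !modn_small ?ltn_ord // => /eqP; apply: val_inj.
  have phictr : phi ctr = x.
    rewrite /phi /s -vp; congr v.
    rewrite modnDmr; have -> : ctr + (p + (a - ctr)) = p + a by have := ltn_ord ctr; lia.
    by rewrite modnDr modn_small.
  have nb (w : 'I_a) : w != ctr -> edge_col c x (phi w) = true.
    move=> wc.
    have nx : phi w != x by rewrite -phictr (inj_eq phiinj).
    have := vW _ (idx w); rewrite in_setU1 (negbTE nx) /= => /(subsetP sN').
    by rewrite inE => /andP[].
  exists phi; split; [split => // u w|].
  + rewrite Hctr => /orP[/andP[/eqP -> wc]|/andP[/eqP -> uc]] _.
    * by rewrite phictr nb.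
    * rewrite edge_colC ?phictr ?nb //.
      by rewrite -phictr (inj_eq phiinj).
  + apply: (@cyc_of _ _ phi (fun j => val (v j)) s a0 sa) => //.
    by move=> i ia; apply: vinc; rewrite leqnn ia.
- right.
  have Hlt x : #|nbr c x| < k by rewrite ltnNge Hno.
  have [T [_ Ti Tc]] := indep Hlt [set: 'I_n].
  have cT : b <= #|T|.
    rewrite cardsT card_ord /n -/k in Tc.
    rewrite leqNgt; apply/negP => hT.
    have : k * #|T| <= k * (b - 1) by apply: leq_mul => //; lia.
    by move=> HH; move: (leq_trans Tc HH); rewrite add1n ltnn.
  have n0 : 0 < n by rewrite /n.
  pose x0 : 'I_n := Ordinal n0.
  have [vinc [vW _]] := pick_sorted T x0.
  set v := fun j => nth x0 (enum T) j.
  pose phi (i : 'I_b) : 'I_n := v i.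
  have vinj : forall i j, i < b -> j < b -> v i = v j -> i = j.
    move=> i j ia ja E; apply: (inc_inj (f := fun j => val (v j)) vinc) => //; try lia.
    by rewrite /= E.
  have phiinj : injective phi by move=> u w /vinj E; apply: val_inj; apply: E.
  exists phi; split; [split => // u w _ uw|].
  + apply: Ti; rewrite ?vW ?(inj_eq phiinj) //; exact: (leq_trans (ltn_ord _) cT).
  + have b0 : 0 < b by lia.
    apply: (@cyc_of _ _ phi (fun j => val (v j)) 0 b0 b0).
    * by move=> i ib; apply: vinc; rewrite leqnn /=; apply: leq_trans cT.
    * by move=> i; rewrite addn0 modn_small.
Qed.

Theorem corollary4p19 (a b : nat) (e : rel 'I_a) :
  (1 <= a)%N -> (2 <= b)%N -> is_star e ->
  Rcyc_eq e (cmon b) (1 + (a - 1) * (b - 1)).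
Proof.
move=> a1 b2 st; split; first exact: upper.
by move=> n nlt; apply: lower.
Qed.
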